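(* Let $C_{\mathrm{SSD}}=\mathrm{SSD}(D(X),D(Y))$ be the output of the SSD algorithm applied to the full dictionary snapshots. Consider the P-SSD algorithm described in the context, executed over an arbitrary, possibly time-varying, sequence of digraphs. Then at each iteration $k\in\mathbb{N}_0$, $\mathcal{R}(C_{\mathrm{SSD}})\subseteq\mathcal{R}(C_k^i)$ for all $i\in\{1,\dots,M\}$.
   Context: Data setting: a map $T:\mathcal{M}\to\mathcal{M}$, $\mathcal{M}\subseteq\mathbb{R}^n$; a dictionary $D(x)=[d_1(x),\dots,d_{N_d}(x)]$ of real-valued functions on $\mathcal{M}$; data matrices $X,Y\in\mathbb{R}^{N\times n}$ whose $i$-th rows $x_i^T,y_i^T$ satisfy $y_i=T(x_i)$; $D(X)\in\mathbb{R}^{N\times N_d}$ is the matrix with rows $D(x_1),\dots,D(x_N)$ (similarly $D(Y)$). Assumption: $D(X)$ and $D(Y)$ have full column rank. There are $M$ agents; agent $i$ holds local dictionary snapshots $D(X_i),D(Y_i)$ (obtained from a subset of the snapshot pairs) such that the union over $i$ of the rows of $[D(X_i),D(Y_i)]$ equals the set of rows of $[D(X),D(Y)]$. There are signature matrices $D(X_s),D(Y_s)$ with full column rank such that the rows of $[D(X_s),D(Y_s)]$ are contained in the rows of $[D(X_i),D(Y_i)]$ for every $i$. SSD algorithm: given $A,B\in\mathbb{R}^{m\times q}$, set $A_1=A$, $B_1=B$, $C=I_q$, and iterate: let $[Z^A_j;Z^B_j]$ be a matrix whose columns form a basis of the null space of $[A_j,B_j]$ (with $Z^A_j$ having as many rows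 as $A_j$ has columns); if the null space is trivial return $0$; if the number of rows of $Z^A_j$ is at most its number of columns, return $C$; otherwise set $C\leftarrow CZ^A_j$, $A_{j+1}=A_jZ^A_j$, $B_{j+1}=B_jZ^A_j$. Its output is denoted $\mathrm{SSD}(A,B)$. P-SSD algorithm: at iteration $k\ge1$ the digraph $G_k$ is used; an edge $(j,i)\in E_k$ means $j$ is an in-neighbor of $i$, and $\mathcal{N}_{\mathrm{in}}^k(i)$ denotes the in-neighbors of $i$ in $G_k$. Each agent $i$ sets $C_0^i=I_{N_d}$, $\mathrm{flag}_0^i=0$, and for $k=1,2,\dots$: receives $C_{k-1}^j$ for $j\in\mathcal{N}_{\mathrm{in}}^k(i)$; sets $D_k^i=\mathrm{basis}\big(\bigcap_{j\in\{i\}\cup\mathcal{N}_{\mathrm{in}}^k(i)}\mathcal{R}(C_{k-1}^j)\big)$; sets $E_k^i=\mathrm{SSD}(D(X_i)D_k^i,D(Y_i)D_k^i)$; if the number of columns of $D_k^iE_k^i$ is strictly less than that of $C_{k-1}^i$, sets $C_k^i=D_k^iE_k^i$ and $\mathrm{flag}_k^i=0$; otherwise sets $C_k^i=C_{k-1}^i$ and $\mathrm{flag}_k^i=1$; then transmits $C_k^i$ to its out-neighbors. Here $\mathrm{basis}(\mathcal{A})$ returns a matrix whose columns form a basis of the subspace $\mathcal{A}$, and returns $0$ if $\mathcal{A}=\{0\}$; the matrix $0$ is regarded as having $0$ columns. $\mathcal{R}(\cdot)$ denotes range space. *)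

(* Defs.v *)
From HB Require Import structures.
From mathcomp Require Import all_boot all_order all_algebra.
Set Implicit Arguments. Unset Strict Implicit. Unset Printing Implicit Defensive.
Import Order.TTheory GRing.Theory Num.Theory.
Local Open Scope ring_scope.

(* Column vectors / subspaces of R^q are handled through transposes:
   the range (column space) of A : 'M_(q,r) is the row space of A^T. *)

Definition range_sub {R : fieldType} {q r1 r2 : nat}
  (A : 'M[R]_(q, r1)) (B : 'M[R]_(q, r2)) : Prop := (A^T <= B^T)%MS.

Definition null_basis {R : fieldType} {m n r : nat}
  (Mx : 'M[R]_(m, n)) (Z : 'M[R]_(n, r)) : bool :=
  row_free Z^T && (Z^T == kermx Mx^T)%MS.

Definition dict {R : fieldType} {n Nd N : nat}
  (d : 'rV[R]_n -> 'rV[R]_Nd) (X : 'M[R]_(N, n)) : 'M[R]_(N, Nd) :=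
  \matrix_(l < N) d (row l X).

(* Matrices with a variable number of columns (0 columns encodes the matrix 0) *)
Definition cmat (R : fieldType) (q : nat) := {r : nat & 'M[R]_(q, r)}.

(* ssd_run p A B C r out : starting the SSD loop from A_j = A, B_j = B
   (m x p) and current C (q x p), the algorithm may return out (q x r),
   for SOME admissible choice of null-space bases along the way. *)
Inductive ssd_run {R : fieldType} {m q : nat} :
  forall p : nat, 'M[R]_(m, p) -> 'M[R]_(m, p) -> 'M[R]_(q, p) ->
  forall r : nat, 'M[R]_(q, r) -> Prop :=
| SSD_trivial p (A B : 'M[R]_(m, p)) (C : 'M[R]_(q, p)) (Z : 'M[R]_(p + p, 0)) :
    null_basis (row_mx A B) Z -> ssd_run A B C (0 : 'M[R]_(q, 0))
| SSD_stop p (A B : 'M[R]_(m, p)) (C : 'M[R]_(q, p)) r (Z : 'M[R]_(p + p, r.+1)) :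
    null_basis (row_mx A B) Z -> (p <= r.+1)%N -> ssd_run A B C C
| SSD_step p (A B : 'M[R]_(m, p)) (C : 'M[R]_(q, p)) r (Z : 'M[R]_(p + p, r.+1))
    r' (C' : 'M[R]_(q, r')) :
    null_basis (row_mx A B) Z -> (r.+1 < p)%N ->
    ssd_run (A *m usubmx Z) (B *m usubmx Z) (C *m usubmx Z) C' ->
    ssd_run A B C C'.

Definition SSD {R : fieldType} {m q r : nat}
  (A B : 'M[R]_(m, q)) (out : 'M[R]_(q, r)) : Prop :=
  ssd_run A B (1%:M : 'M[R]_q) out.

(* the columns of D form a basis of  ⋂_{j | P j} R(C^j)  (D has 0 columns iff
   the intersection is {0}) *)
Definition cap_basis {R : fieldType} {M Nd s : nat} (P : pred 'I_M)
  (Cs : 'I_M -> cmat R Nd) (D : 'M[R]_(Nd, s)) : bool :=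
  row_free D^T &&
  (D^T == \bigcap_(j | P j) <<(projT2 (Cs j))^T>>)%MS.

(* Cs k i = C_k^i is a possible run of P-SSD over the digraph sequence G,
   where G k j i means (j,i) ∈ E_k, i.e. j is an in-neighbor of i in G_k. *)
Definition pssd_execution {R : fieldType} {M Nd : nat} {Ni : 'I_M -> nat}
  (DXi DYi : forall i : 'I_M, 'M[R]_(Ni i, Nd)) (G : nat -> rel 'I_M)
  (Cs : nat -> 'I_M -> cmat R Nd) : Prop :=
  (forall i, Cs 0%N i = existT (fun r => 'M[R]_(Nd, r)) Nd 1%:M) /\
  (forall (k : nat) (i : 'I_M), exists (s : nat) (D : 'M[R]_(Nd, s))
      (t : nat) (E : 'M[R]_(s, t)),
      cap_basis (fun j => (j == i) || G k.+1 j i) (Cs k) D /\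
      SSD (DXi i *m D) (DYi i *m D) E /\
      Cs k.+1 i = if (t < projT1 (Cs k i))%N
                  then existT (fun r => 'M[R]_(Nd, r)) t (D *m E)
                  else Cs k i).

(* Main.v *)
Require Import Defs.
From HB Require Import structures.
From mathcomp Require Import all_boot all_order all_algebra zify.
Import Order.TTheory GRing.Theory Num.Theory.
Local Open Scope ring_scope.

Set Implicit Arguments. Unset Strict Implicit.
Section S.
Variable R : fieldType.

Lemma null_rank m p r (A B : 'M[R]_(m, p)) (Z : 'M[R]_(p + p, r)) :
  null_basis (row_mx A B) Z -> (r + \rank (col_mx A^T B^T) = p + p)%N.
Proof.
case/andP=> fZ eZ.
have := mxrank_ker (row_mx A B)^T.
rewrite -(eqmx_rank eZ) (eqP fZ) tr_row_mx => ->.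
rewrite subnK // -tr_row_mx mxrank_tr.
by apply: leq_trans (rank_leq_col _) _.
Qed.

Lemma null_mul m p r (A B : 'M[R]_(m, p)) (Z : 'M[R]_(p + p, r)) :
  null_basis (row_mx A B) Z ->
  (usubmx Z)^T *m A^T + (dsubmx Z)^T *m B^T = 0.
Proof.
case/andP=> _ /andP [/sub_kermxP h _].
by rewrite -mul_row_col -tr_col_mx vsubmxK -tr_row_mx.
Qed.

Lemma global_run m q (DX DY : 'M[R]_(m, q)) p (A B : 'M[R]_(m, p)) (C : 'M[R]_(q, p))
   r (out : 'M[R]_(q, r)) :
  ssd_run A B C out -> row_free DY^T ->
  A = DX *m C -> B = DY *m C -> row_free C^T ->
  exists K : 'M[R]_(r, r), DX *m out = DY *m out *m K.
Proof.
move=> run fY; elim: run => {p A B C r out}.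
- by move=> p A B C Z _ _ _ _; exists 0; rewrite !thinmx0.
- move=> p A B C r Z nb le eA eB fC.
  have rk := null_rank nb.
  have fB : row_free B^T by rewrite eB trmx_mul /row_free mxrankMfree.
  have rB : \rank B^T = p by rewrite (eqP fB).
  have sub : (A^T <= B^T)%MS.
    have s1 : (B^T <= col_mx A^T B^T)%MS by rewrite -addsmxE addsmxSr.
    have s2 : (col_mx A^T B^T <= B^T)%MS.
      rewrite -(mxrank_leqif_sup s1) eqn_leq mxrankS //= rB.
      lia.
    apply: submx_trans s2; by rewrite -addsmxE addsmxSl.
  case/submxP: sub => K0 hK; exists K0^T.
  by rewrite -eA -eB -[A]trmxK hK trmx_mul trmxK.
- move=> p A B C r Z r' C' nb lt run IH eA eB fC.
  have fB : row_free B^T by rewrite eB trmx_mul /row_free mxrankMfree.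
  apply: IH; first by rewrite eA mulmxA.
    by rewrite eB mulmxA.
  rewrite trmx_mul /row_free mxrankMfree //.
  rewrite -[_ == _]/(row_free _) -kermx_eq0; set V := kermx _.
  have hV : V *m (usubmx Z)^T = 0 by rewrite mulmx_ker.
  have h1 : V *m (dsubmx Z)^T *m B^T = 0.
    have := congr1 (mulmx V) (null_mul nb).
    by rewrite mulmx0 mulmxDr !mulmxA hV mul0mx add0r.
  move/eqP: h1; rewrite mulmx_free_eq0 // => /eqP h1.
  have h2 : V *m Z^T = 0.
    by rewrite -[Z]vsubmxK tr_col_mx mul_mx_row hV h1 row_mx0.
  case/andP: nb => fZ _.
  by move/eqP: h2; rewrite mulmx_free_eq0.
Qed.

Lemma local_step m q0 (DXi DYi : 'M[R]_(m, q0)) q (Dl : 'M[R]_(q0, q)) rg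
  (Cg : 'M[R]_(q0, rg)) (K : 'M[R]_(rg, rg)) p (A B : 'M[R]_(m, p))
  (C : 'M[R]_(q, p)) r (Z : 'M[R]_(p + p, r)) :
  null_basis (row_mx A B) Z -> DXi *m Cg = DYi *m Cg *m K ->
  A = DXi *m Dl *m C -> B = DYi *m Dl *m C -> (Cg^T <= (Dl *m C)^T)%MS ->
  (Cg^T <= (Dl *m (C *m usubmx Z))^T)%MS.
Proof.
move=> nb hK eA eB /submxP [W0 hW].
set W := W0^T.
have eCg : Cg = Dl *m C *m W by rewrite -[Cg]trmxK hW trmx_mul trmxK.
have h0 : row_mx W^T (- (W *m K)^T) *m (row_mx A B)^T = 0.
  rewrite tr_row_mx mul_row_col eA eB !trmx_mul mulNmx -!trmx_mul.
  have e1 : DXi *m Dl *m C *m W = DXi *m Cg by rewrite eCg !mulmxA.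
  have e2 : DYi *m Dl *m C *m (W *m K) = DYi *m Cg *m K by rewrite eCg !mulmxA.
  by rewrite e1 e2 hK subrr.
case/andP: nb => _ eZ.
have /submxP [U hU] : (row_mx W^T (- (W *m K)^T) <= Z^T)%MS.
  by rewrite (eqmxP eZ); apply/sub_kermxP.
have hWT : W^T = U *m (usubmx Z)^T.
  have := congr1 lsubmx hU.
  by rewrite row_mxKl -[Z]vsubmxK tr_col_mx mul_mx_row row_mxKl vsubmxK.
apply/submxP; exists U.
by rewrite eCg trmx_mul hWT -!mulmxA -!trmx_mul mulmxA.
Qed.

Lemma local_run m q0 (DXi DYi : 'M[R]_(m, q0)) q (Dl : 'M[R]_(q0, q)) rg
  (Cg : 'M[R]_(q0, rg)) (K : 'M[R]_(rg, rg)) p (A B : 'M[R]_(m, p))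
  (C : 'M[R]_(q, p)) r (out : 'M[R]_(q, r)) :
  ssd_run A B C out -> DXi *m Cg = DYi *m Cg *m K ->
  A = DXi *m Dl *m C -> B = DYi *m Dl *m C -> (Cg^T <= (Dl *m C)^T)%MS ->
  (Cg^T <= (Dl *m out)^T)%MS.
Proof.
move=> run hK; elim: run => {p A B C r out}.
- move=> p A B C Z nb eA eB sub.
  have := local_step nb hK eA eB sub.
  by rewrite (thinmx0 (C *m usubmx Z)).
- by move=> p A B C r Z nb le eA eB sub.
- move=> p A B C r Z r' C' nb lt run IH eA eB sub.
  apply: IH; first by rewrite eA mulmxA.
    by rewrite eB mulmxA.
  exact: local_step nb hK eA eB sub.
Qed.
End S.

Unset Implicit Arguments.
Theorem proposition4p8 (R : realFieldType) (n N Nd M : nat)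
  (Mset : 'rV[R]_n -> Prop) (T : 'rV[R]_n -> 'rV[R]_n)
  (d : 'rV[R]_n -> 'rV[R]_Nd)
  (X Y : 'M[R]_(N, n))
  (Ni : 'I_M -> nat) (Xi Yi : forall i : 'I_M, 'M[R]_(Ni i, n))
  (Ns : nat) (Xs Ys : 'M[R]_(Ns, n))
  (G : nat -> rel 'I_M) (Cs : nat -> 'I_M -> cmat R Nd)
  (rSSD : nat) (CSSD : 'M[R]_(Nd, rSSD)) :
  (forall x, Mset x -> Mset (T x)) ->
  (forall l, Mset (row l X)) ->
  (forall l, row l Y = T (row l X)) ->
  \rank (dict d X) = Nd -> \rank (dict d Y) = Nd ->
  (forall (i : 'I_M) (l : 'I_(Ni i)), exists l' : 'I_N,
      row l (Xi i) = row l' X /\ row l (Yi i) = row l' Y) ->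
  (forall v : 'rV[R]_(Nd + Nd),
      (exists (i : 'I_M) (l : 'I_(Ni i)),
          row l (row_mx (dict d (Xi i)) (dict d (Yi i))) = v) <->
      (exists l : 'I_N, row l (row_mx (dict d X) (dict d Y)) = v)) ->
  \rank (dict d Xs) = Nd -> \rank (dict d Ys) = Nd ->
  (forall (i : 'I_M) (l : 'I_Ns), exists l' : 'I_(Ni i),
      row l (row_mx (dict d Xs) (dict d Ys)) =
      row l' (row_mx (dict d (Xi i)) (dict d (Yi i)))) ->
  SSD (dict d X) (dict d Y) CSSD ->
  pssd_execution (fun i => dict d (Xi i)) (fun i => dict d (Yi i)) G Cs ->
  forall (k : nat) (i : 'I_M), range_sub CSSD (projT2 (Cs k i)).
Proof.
move=> _ _ _ _ rY hsub _ _ _ _ hSSD [h0 hstep].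
have fY : row_free (dict d Y)^T by rewrite /row_free mxrank_tr rY.
have f1 : row_free (1%:M : 'M[R]_Nd)^T by rewrite /row_free trmx1 mxrank1.
have [K hK] := global_run hSSD fY (esym (mulmx1 _)) (esym (mulmx1 _)) f1.
have hloc : forall i, dict d (Xi i) *m CSSD = dict d (Yi i) *m CSSD *m K.
  move=> i; apply/row_matrixP => l; have [l' [e1 e2]] := hsub i l.
  have := congr1 (row l') hK.
  by rewrite !row_mul /dict !rowK e1 e2.
elim=> [|k IH] i.
  by rewrite h0 /range_sub /= trmx1 submx1.
have [s [D [t [E [hcap [hE hC]]]]]] := hstep k i.
rewrite hC.
have subD : (CSSD^T <= (D *m 1%:M)^T)%MS.
  rewrite mulmx1; case/andP: hcap => _ /eqmxP ->.
  apply/sub_bigcapmxP => j _; rewrite genmxE; exact: IH.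
have := local_run hE (hloc i) (esym (mulmx1 _)) (esym (mulmx1 _)) subD.
by case: ifP => _ //= ; exact: IH.
Qed.
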